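(* Let $k$ be a finite field, and let $X,Y$ be the IMOU Calabi--Yau threefolds over $k$ (described in the context). Then $X$ and $Y$ have the same zeta function.
   Context: IMOU construction over $k$. Let $G_2$ be the split group of type $G_2$, with $Q=G_2/P_1$ (the smooth $5$-dimensional quadric), $G=G_2/P_2$ (the $G_2$-Grassmannian) and $F=G_2/B$. The natural $\mathbb P^1$-bundles are $\pi\colon F\to Q$ and $\rho\colon F\to G$. For a general section $s$ of $\pi^*\mathcal O_Q(1)\otimes\rho^*\mathcal O_G(1)$ with zero locus $M$, put \[ X=\{x\in Q:\pi^{-1}(x)\subset M\},\qquad Y=\{y\in G:\rho^{-1}(y)\subset M\}. \] These are smooth Calabi--Yau threefolds, and $M$ is simultaneously the blow-up of $Q$ along $X$ and the blow-up of $G$ along $Y$. *)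

(* Defs.v *)
From HB Require Import structures.
From mathcomp Require Import all_boot all_order all_algebra.
Set Implicit Arguments. Unset Strict Implicit. Unset Printing Implicit Defensive.
Import Order.TTheory GRing.Theory Num.Theory.
Local Open Scope ring_scope.

(* Split octonions (Zorn vector matrices), used to model the split G2.
   A vector x : 'rV[L]_8 encodes (a, u, v, b) with a = x_0, u = (x_1,x_2,x_3),
   v = (x_4,x_5,x_6), b = x_7.  Product:
   (a,u,v,b)(a',u',v',b') = (aa' + u.v', a u' + b' u - v x v',
                             a' v + b v' + u x u', v.u' + b b').  This is the split Cayley algebra over
   any field; G2 = Aut of it. *)
Section Oct.
Variable L : finFieldType.

Definition oc (x : 'rV[L]_8) (n : nat) : L := x ord0 (inord n).

Definition cross3 (p q : nat -> L) (i : nat) : L :=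
  match i with
  | 0 => p 1%N * q 2%N - p 2%N * q 1%N
  | 1 => p 2%N * q 0%N - p 0%N * q 2%N
  | _ => p 0%N * q 1%N - p 1%N * q 0%N
  end.

Definition omul_coord (x y : 'rV[L]_8) (k : nat) : L :=
  let a := oc x 0 in let b := oc x 7 in
  let u := fun i => oc x (1 + i) in let v := fun i => oc x (4 + i) in
  let a' := oc y 0 in let b' := oc y 7 in
  let u' := fun i => oc y (1 + i) in let v' := fun i => oc y (4 + i) in
  match k with
  | 0 => a * a' + (u 0%N * v' 0%N + u 1%N * v' 1%N + u 2%N * v' 2%N)
  | 1 | 2 | 3 => a * u' (k - 1)%N + b' * u (k - 1)%N - cross3 v v' (k - 1)%N
  | 4 | 5 | 6 => a' * v (k - 4)%N + b * v' (k - 4)%N + cross3 u u' (k - 4)%N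
  | _ => (v 0%N * u' 0%N + v 1%N * u' 1%N + v 2%N * u' 2%N) + b * b'
  end.

Definition omul (x y : 'rV[L]_8) : 'rV[L]_8 := \row_(k < 8) omul_coord x y k.

Definition onorm (x : 'rV[L]_8) : L :=
  oc x 0 * oc x 7 - (oc x 1 * oc x 4 + oc x 2 * oc x 5 + oc x 3 * oc x 6).

Definition otr (x : 'rV[L]_8) : L := oc x 0 + oc x 7.

(* Q = G2/P1 (5-dim quadric): points <x> with T(x) = 0 and N(x) = 0
   (points of the split Cayley hexagon). *)
Definition Qpt (x : 'rV[L]_8) : bool :=
  [&& x != 0, otr x == 0 & onorm x == 0].

(* G = G2/P2: 2-planes W = rowspace A of trace-zero octonions with W.W = 0
   (lines of the split Cayley hexagon). *)
Definition Gln (A : 'M[L]_(2, 8)) : bool :=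
  let w1 := row ord0 A in let w2 := row ord_max A in
  [&& \rank A == 2%N, otr w1 == 0, otr w2 == 0,
      omul w1 w1 == 0, omul w1 w2 == 0, omul w2 w1 == 0 & omul w2 w2 == 0].

(* A section of pi^* O_Q(1) (x) rho^* O_G(1): a form linear in the
   coordinates of x and linear in the Pluecker coordinates w1 /\ w2 of W,
   with coefficients c. *)
Definition sec_eval (c : 'I_8 -> 'I_8 -> 'I_8 -> L) (x w1 w2 : 'rV[L]_8) : L :=
  \sum_(i < 8) \sum_(j < 8) \sum_(l < 8)
     c i j l * (x ord0 i * (w1 ord0 j * w2 ord0 l - w1 ord0 l * w2 ord0 j)).

(* X = { x in Q : pi^{-1}(x) subset M }: every line W of G through x has
   s(x, W) = 0. *)
Definition Xcond (c : 'I_8 -> 'I_8 -> 'I_8 -> L) (x : 'rV[L]_8) : bool :=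
  Qpt x && [forall A : 'M[L]_(2, 8),
              (Gln A && (x <= A)%MS) ==> (sec_eval c x (row ord0 A) (row ord_max A) == 0)].

(* Y = { W in G : rho^{-1}(W) subset M }: every point x of P(W) has
   s(x, W) = 0. *)
Definition Ycond (c : 'I_8 -> 'I_8 -> 'I_8 -> L) (A : 'M[L]_(2, 8)) : bool :=
  Gln A && [forall x : 'rV[L]_8,
              ((x != 0) && (x <= A)%MS) ==> (sec_eval c x (row ord0 A) (row ord_max A) == 0)].

End Oct.

(* L-rational points of X and Y, as sets of subspaces (represented by the
   canonical matrix <<_>>%MS of their row space). *)
Definition Xpts (L : finFieldType) (c : 'I_8 -> 'I_8 -> 'I_8 -> L) : {set 'M[L]_8} :=
  [set (<<x>>%MS : 'M[L]_8) | x : 'rV[L]_8 & Xcond c x].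

Definition Ypts (L : finFieldType) (c : 'I_8 -> 'I_8 -> 'I_8 -> L) : {set 'M[L]_8} :=
  [set (<<A>>%MS : 'M[L]_8) | A : 'M[L]_(2, 8) & Ycond c A].

(* Two k-varieties have the same zeta function iff they have the same number
   of points over every finite extension L of k (the zeta function being
   exp (sum_n N_n t^n / n)). *)
Definition same_zeta (k : finFieldType)
  (NX NY : forall L : finFieldType, {rmorphism k -> L} -> nat) : Prop :=
  forall (L : finFieldType) (f : {rmorphism k -> L}), NX L f = NY L f.

(* Main.v *)
Require Import Defs.
From HB Require Import structures.
From mathcomp Require Import all_boot all_order all_algebra.
From mathcomp Require Import ring.
Set Implicit Arguments. Unset Strict Implicit. Unset Printing Implicit Defensive.


Lemma card_pairs (T1 T2 : finType) (P : T1 -> T2 -> bool) :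
  #|[set p : T1 * T2 | P p.1 p.2]| = \sum_(x : T1) #|[set y | P x y]|.
Proof.
rewrite -sum1_card.
rewrite (eq_bigl (fun p : T1 * T2 => predT p.1 && P p.1 p.2)); last by move=> p; rewrite inE.
rewrite -(pair_big_dep predT (fun x y => P x y) (fun _ _ => 1%N)).
by apply: eq_bigr => x _; rewrite -sum1_card; apply: eq_bigl => y; rewrite inE.
Qed.

Lemma sum_if (T : finType) (P : pred T) (k : nat) :
  \sum_(x : T) (if P x then k else 0%N) = (k * #|[set x | P x]|)%N.
Proof.
rewrite -big_mkcond /= sum_nat_const mulnC; congr (_ * _)%N.
by apply: eq_card => x; rewrite inE.
Qed.

Lemma fin_arith (n a b y g X Y : nat) : (0 < n)%N ->
  y + g = (a + b) * (n.+1 * (n * n.+2)) ->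
  (n.+1 * n) * (n * n.+2) * (n.+1 * (n * n.+2) * a + n.+1 * n * b) =
     (n.+1 * n) * (n * n.+2) * y + (n.+1 * n) * n * g ->
  a = n * X -> y = (n.+1 * n) * (n * n.+2) * Y -> X = Y.
Proof.
move=> n0 E1 E2 EX EY.
set q := n.+1 in E1 E2 EY *; set m := n * n.+2 in E1 E2 EY *.
have kpos : 0 < q * n by rewrite muln_gt0 n0.
have E2' : m * (q * m * a + q * n * b) = m * y + n * g.
  apply/eqP; rewrite -(eqn_pmul2l kpos); apply/eqP.
  have -> : q * n * (m * (q * m * a + q * n * b)) = q * n * m * (q * m * a + q * n * b) by ring.
  by rewrite E2; ring.
have E3 : m * q * m * a + n * y = m * y + n * q * m * a.
  apply/eqP; rewrite -(eqn_add2r (m * q * n * b)); apply/eqP.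
  have -> : m * q * m * a + n * y + m * q * n * b = m * (q * m * a + q * n * b) + n * y by ring.
  rewrite E2'.
  have -> : m * y + n * g + n * y = m * y + n * (y + g) by ring.
  by rewrite E1; ring.
have dpos : 0 < n * q by rewrite muln_gt0 n0.
have E4 : q * m * a = y.
  apply/eqP; rewrite -(eqn_pmul2l dpos); rewrite -(eqn_add2l (n * y + n * q * m * a)).
  apply/eqP.
  have -> : n * y + n * q * m * a + n * q * (q * m * a) = m * q * m * a + n * y by rewrite /m /q; ring.
  by rewrite E3 /m /q; ring.
have mpos : 0 < q * m * n by rewrite /m /q !muln_gt0 n0.
apply/eqP; rewrite -(eqn_pmul2l mpos); apply/eqP.
have -> : q * m * n * X = q * m * a by rewrite EX; ring.
by rewrite E4 EY; ring.
Qed.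
Lemma e1 n : (n.+2 * n.+2 - n.+2 = n.+2 * n.+1)%N.
Proof. by rewrite -{3}(muln1 n.+2) -mulnBr subn1. Qed.
Lemma e2 n : ((n.+2 * n.+2).-1 = n.+1 * n.+3)%N.
Proof. have -> : (n.+2 * n.+2 = (n.+1 * n.+3).+1)%N by ring. by []. Qed.

Import Order.TTheory GRing.Theory Num.Theory.
Local Open Scope ring_scope.


Section Infra.
Variable L : finFieldType.

Definition mk8 (a0 a1 a2 a3 a4 a5 a6 a7 : L) : 'rV[L]_8 :=
  \row_(i < 8) nth 0 [:: a0; a1; a2; a3; a4; a5; a6; a7] i.

Lemma eta8 (x : 'rV[L]_8) :
  x = mk8 (oc x 0) (oc x 1) (oc x 2) (oc x 3) (oc x 4) (oc x 5) (oc x 6) (oc x 7).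
Proof.
apply/rowP => i; rewrite mxE /oc.
have -> : (ord0 : 'I_1) = 0 by [].
case: i => [[|[|[|[|[|[|[|[|//]]]]]]]] Hi] /=; congr (x _ _); apply: val_inj;
  by rewrite /= inordK.
Qed.

Lemma oc_mk8 a0 a1 a2 a3 a4 a5 a6 a7 (n : nat) : (n < 8)%N ->
  oc (mk8 a0 a1 a2 a3 a4 a5 a6 a7) n = nth 0 [:: a0; a1; a2; a3; a4; a5; a6; a7] n.
Proof. by move=> Hn; rewrite /oc !mxE inordK. Qed.

Lemma mk8_inj a0 a1 a2 a3 a4 a5 a6 a7 b0 b1 b2 b3 b4 b5 b6 b7 :
  mk8 a0 a1 a2 a3 a4 a5 a6 a7 = mk8 b0 b1 b2 b3 b4 b5 b6 b7 ->
  [/\ a0 = b0, a1 = b1, a2 = b2, a3 = b3 & [/\ a4 = b4, a5 = b5, a6 = b6 & a7 = b7]].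
Proof.
move=> E.
have H n : (n < 8)%N -> nth 0 [:: a0; a1; a2; a3; a4; a5; a6; a7] n = nth 0 [:: b0; b1; b2; b3; b4; b5; b6; b7] n.
  by move=> Hn; rewrite -!oc_mk8 // E.
by split; [exact: (H 0%N)|exact: (H 1%N)|exact: (H 2%N)|exact: (H 3%N)|split;
  [exact: (H 4%N)|exact: (H 5%N)|exact: (H 6%N)|exact: (H 7%N)]].
Qed.

Lemma mk8_0 : (0 : 'rV[L]_8) = mk8 0 0 0 0 0 0 0 0.
Proof. by apply/rowP => i; rewrite !mxE; case: i => [[|[|[|[|[|[|[|[|//]]]]]]]] Hi]. Qed.

Lemma lin_mk8 (a b : L) a0 a1 a2 a3 a4 a5 a6 a7 b0 b1 b2 b3 b4 b5 b6 b7 :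
  a *: mk8 a0 a1 a2 a3 a4 a5 a6 a7 + b *: mk8 b0 b1 b2 b3 b4 b5 b6 b7 =
  mk8 (a*a0+b*b0) (a*a1+b*b1) (a*a2+b*b2) (a*a3+b*b3) (a*a4+b*b4) (a*a5+b*b5)
      (a*a6+b*b6) (a*a7+b*b7).
Proof. by apply/rowP => i; rewrite !mxE; case: i => [[|[|[|[|[|[|[|[|//]]]]]]]] Hi]. Qed.

Lemma scale_mk8 (a : L) a0 a1 a2 a3 a4 a5 a6 a7 :
  a *: mk8 a0 a1 a2 a3 a4 a5 a6 a7 =
  mk8 (a*a0) (a*a1) (a*a2) (a*a3) (a*a4) (a*a5) (a*a6) (a*a7).
Proof. by apply/rowP => i; rewrite !mxE; case: i => [[|[|[|[|[|[|[|[|//]]]]]]]] Hi]. Qed.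

Lemma add_mk8 a0 a1 a2 a3 a4 a5 a6 a7 b0 b1 b2 b3 b4 b5 b6 b7 :
  mk8 a0 a1 a2 a3 a4 a5 a6 a7 + mk8 b0 b1 b2 b3 b4 b5 b6 b7 =
  mk8 (a0+b0) (a1+b1) (a2+b2) (a3+b3) (a4+b4) (a5+b5) (a6+b6) (a7+b7).
Proof. by apply/rowP => i; rewrite !mxE; case: i => [[|[|[|[|[|[|[|[|//]]]]]]]] Hi]. Qed.

Lemma omul_mk8 a0 a1 a2 a3 a4 a5 a6 a7 b0 b1 b2 b3 b4 b5 b6 b7 :
  omul (mk8 a0 a1 a2 a3 a4 a5 a6 a7) (mk8 b0 b1 b2 b3 b4 b5 b6 b7) =
  mk8 (a0*b0 + (a1*b4 + a2*b5 + a3*b6))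
      (a0*b1 + b7*a1 - (a5*b6 - a6*b5))
      (a0*b2 + b7*a2 - (a6*b4 - a4*b6))
      (a0*b3 + b7*a3 - (a4*b5 - a5*b4))
      (b0*a4 + a7*b4 + (a2*b3 - a3*b2))
      (b0*a5 + a7*b5 + (a3*b1 - a1*b3))
      (b0*a6 + a7*b6 + (a1*b2 - a2*b1))
      ((a4*b1 + a5*b2 + a6*b3) + a7*b7).
Proof.
apply/rowP => i; rewrite !mxE; case: i => [[|[|[|[|[|[|[|[|//]]]]]]]] Hi];
 by rewrite /omul_coord /cross3 /= !oc_mk8.
Qed.

Lemma otr_mk8 a0 a1 a2 a3 a4 a5 a6 a7 : otr (mk8 a0 a1 a2 a3 a4 a5 a6 a7) = a0 + a7.
Proof. by rewrite /otr !oc_mk8. Qed.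

Lemma onorm_mk8 a0 a1 a2 a3 a4 a5 a6 a7 :
  onorm (mk8 a0 a1 a2 a3 a4 a5 a6 a7) = a0 * a7 - (a1 * a4 + a2 * a5 + a3 * a6).
Proof. by rewrite /onorm !oc_mk8. Qed.

End Infra.


Section B.
Variable L : finFieldType.
Implicit Types x y z w : 'rV[L]_8.

Lemma omulDl (a b : L) x y z : omul (a *: x + b *: y) z = a *: omul x z + b *: omul y z.
Proof. rewrite [x]eta8 [y]eta8 [z]eta8 lin_mk8 !omul_mk8 lin_mk8; congr mk8; ring. Qed.

Lemma omulDr (a b : L) x y z : omul z (a *: x + b *: y) = a *: omul z x + b *: omul z y.
Proof. rewrite [x]eta8 [y]eta8 [z]eta8 lin_mk8 !omul_mk8 lin_mk8; congr mk8; ring. Qed.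

Lemma otrD (a b : L) x y : otr (a *: x + b *: y) = a * otr x + b * otr y.
Proof. rewrite [x]eta8 [y]eta8 lin_mk8 !otr_mk8; ring. Qed.

Lemma otrZ (a : L) x : otr (a *: x) = a * otr x.
Proof. by rewrite -[a *: x]addr0 -(scale0r x) otrD mul0r addr0. Qed.

Lemma omulZl (a : L) x z : omul (a *: x) z = a *: omul x z.
Proof. by rewrite -[a *: x]addr0 -(scale0r x) omulDl scale0r addr0. Qed.

Lemma omulZr (a : L) x z : omul z (a *: x) = a *: omul z x.
Proof. by rewrite -[a *: x]addr0 -(scale0r x) omulDr scale0r addr0. Qed.

Lemma onormZ (a : L) x : onorm (a *: x) = a ^+ 2 * onorm x.
Proof. rewrite [x]eta8 scale_mk8 !onorm_mk8; ring. Qed.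

Lemma sqr_norm z : otr z = 0 -> (omul z z = 0 <-> onorm z = 0).
Proof.
rewrite [z]eta8 otr_mk8 onorm_mk8 omul_mk8 mk8_0.
set a0 := oc z 0; set a1 := oc z 1; set a2 := oc z 2; set a3 := oc z 3.
set a4 := oc z 4; set a5 := oc z 5; set a6 := oc z 6; set a7 := oc z 7.
move=> /eqP; rewrite addr_eq0 => /eqP E7; rewrite E7.
split.
  move=> /mk8_inj [H0 _ _ _ _]; rewrite -[RHS]oppr0 -H0; ring.
move=> H; congr mk8; try ring; rewrite -[RHS]oppr0 -H; ring.
Qed.

Lemma omul_comm0 z w : otr z = 0 -> otr w = 0 -> omul w z = 0 -> omul z w = 0.
Proof.
rewrite [z]eta8 [w]eta8 !otr_mk8 !omul_mk8 mk8_0.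
move=> /eqP; rewrite addr_eq0 => /eqP ->.
move=> /eqP; rewrite addr_eq0 => /eqP ->.
move=> /mk8_inj [H0 H1 H2 H3 [H4 H5 H6 H7]].
congr mk8.
- by rewrite -H7; ring.
- by rewrite -[RHS]oppr0 -H1; ring.
- by rewrite -[RHS]oppr0 -H2; ring.
- by rewrite -[RHS]oppr0 -H3; ring.
- by rewrite -[RHS]oppr0 -H4; ring.
- by rewrite -[RHS]oppr0 -H5; ring.
- by rewrite -[RHS]oppr0 -H6; ring.
- by rewrite -H0; ring.
Qed.

Variable c : 'I_8 -> 'I_8 -> 'I_8 -> L.
Local Notation sec := (sec_eval c).

Lemma secDx (a b : L) x y w1 w2 : sec (a *: x + b *: y) w1 w2 = a * sec x w1 w2 + b * sec y w1 w2.
Proof.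
rewrite /sec_eval !mulr_sumr -big_split /=; apply: eq_bigr => i _.
rewrite !mulr_sumr -big_split /=; apply: eq_bigr => j _.
rewrite !mulr_sumr -big_split /=; apply: eq_bigr => l _.
rewrite !mxE; ring.
Qed.

Lemma secD1 (a b : L) x y w1 w2 : sec w1 (a *: x + b *: y) w2 = a * sec w1 x w2 + b * sec w1 y w2.
Proof.
rewrite /sec_eval !mulr_sumr -big_split /=; apply: eq_bigr => i _.
rewrite !mulr_sumr -big_split /=; apply: eq_bigr => j _.
rewrite !mulr_sumr -big_split /=; apply: eq_bigr => l _.
rewrite !mxE; ring.
Qed.

Lemma secD2 (a b : L) x y w1 w2 : sec w1 w2 (a *: x + b *: y) = a * sec w1 w2 x + b * sec w1 w2 y.
Proof.
rewrite /sec_eval !mulr_sumr -big_split /=; apply: eq_bigr => i _.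
rewrite !mulr_sumr -big_split /=; apply: eq_bigr => j _.
rewrite !mulr_sumr -big_split /=; apply: eq_bigr => l _.
rewrite !mxE; ring.
Qed.

Lemma sec_alt x w : sec x w w = 0.
Proof.
rewrite /sec_eval big1 // => i _; rewrite big1 // => j _; rewrite big1 // => l _.
ring.
Qed.

Lemma sec_anti x w1 w2 : sec x w2 w1 = - sec x w1 w2.
Proof.
rewrite /sec_eval -sumrN; apply: eq_bigr => i _.
rewrite -sumrN; apply: eq_bigr => j _.
rewrite -sumrN; apply: eq_bigr => l _.
ring.
Qed.

Lemma secZx (a : L) x w1 w2 : sec (a *: x) w1 w2 = a * sec x w1 w2.
Proof. by rewrite -[a *: x]addr0 -(scale0r x) secDx mul0r addr0. Qed.

Lemma sec_basis (a b d e : L) x r0 r1 :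
  sec x (a *: r0 + b *: r1) (d *: r0 + e *: r1) = (a * e - b * d) * sec x r0 r1.
Proof.
rewrite secD1 !secD2 !sec_alt (sec_anti x r0 r1); ring.
Qed.

End B.


Section C.
Variable L : finFieldType.
Implicit Types x y z w : 'rV[L]_8.

Definition mk2 z w : 'M[L]_(2, 8) := \matrix_(i < 2, j < 8) if i == ord0 then z 0 j else w 0 j.

Lemma mk2_row0 z w : row ord0 (mk2 z w) = z.
Proof. by apply/rowP => j; rewrite !mxE eqxx; congr (z _ _); apply: val_inj; case: (ord0 : 'I_1) => [[]]. Qed.

Lemma mk2_row1 z w : row ord_max (mk2 z w) = w.
Proof. by apply/rowP => j; rewrite !mxE /=; congr (w _ _); apply: val_inj; case: (ord0 : 'I_1) => [[]]. Qed.

Lemma mk2_eta (A : 'M[L]_(2, 8)) : A = mk2 (row ord0 A) (row ord_max A).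
Proof.
apply/matrixP => i j; rewrite !mxE.
case: i => [[|[|//]] Hi] /=; congr (A _ _); exact: val_inj.
Qed.

Lemma mulmx_mk2 (u : 'rV[L]_2) z w : u *m mk2 z w = u 0 0 *: z + u 0 1 *: w.
Proof.
apply/rowP => j; rewrite !mxE !big_ord_recr big_ord0 /= add0r !mxE /=.
by congr (u _ _ * _ + u _ _ * _); apply: val_inj.
Qed.

Definition indep z w := forall a b : L, a *: z + b *: w = 0 -> a = 0 /\ b = 0.

Lemma row_free_mk2 z w : row_free (mk2 z w) <-> indep z w.
Proof.
split.
  move=> rf a b E.
  pose u : 'rV[L]_2 := \row_(j < 2) if j == ord0 then a else b.
  have : u *m mk2 z w = 0 *m mk2 z w by rewrite mul0mx mulmx_mk2 !mxE /= E.
  move/(row_free_inj rf) => /rowP H.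
  by move: (H 0) (H 1); rewrite !mxE /=.
move=> ind; apply/negPn/negP; rewrite -kermx_eq0 => /rowV0Pn [v /sub_kermxP].
rewrite mulmx_mk2 => /ind [H0 H1] /negP; apply; apply/eqP/rowP => j.
rewrite mxE; case: j => [[|[|//]] Hj].
  by rewrite -H0; congr (v _ _); apply: val_inj.
by rewrite -H1; congr (v _ _); apply: val_inj.
Qed.

Lemma GlnE z w : Gln (mk2 z w) <->
  [/\ indep z w, otr z = 0, otr w = 0 &
   [/\ omul z z = 0, omul z w = 0, omul w z = 0 & omul w w = 0]].
Proof.
rewrite /Gln mk2_row0 mk2_row1 -/(row_free (mk2 z w)).
split.
  by case/and5P => /row_free_mk2 H1 /eqP H2 /eqP H3 /eqP H4 /and3P [/eqP H5 /eqP H6 /eqP H7].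
move=> [/row_free_mk2 H1 H2 H3 [H4 H5 H6 H7]].
by rewrite H1 H2 H3 H4 H5 H6 H7 !eqxx.
Qed.

Lemma GlnE2 z w : Gln (mk2 z w) <->
  [/\ indep z w, otr z = 0, otr w = 0 &
   [/\ onorm z = 0, onorm w = 0 & omul z w = 0]].
Proof.
rewrite GlnE; split.
  move=> [H1 H2 H3 [H4 H5 H6 H7]]; split => //; split => //.
    by apply/sqr_norm.
  by apply/sqr_norm.
move=> [H1 H2 H3 [H4 H5 H6]]; split => //; split => //.
- by apply/sqr_norm.
- exact: omul_comm0.
- by apply/sqr_norm.
Qed.

Lemma indepM z w (a b d e : L) : indep z w -> a * e - b * d != 0 ->
  indep (a *: z + b *: w) (d *: z + e *: w).
Proof.
move=> ind det p r E.
have : (p * a + r * d) *: z + (p * b + r * e) *: w = 0.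
  by rewrite -E !scalerDr !scalerA !scalerDl; rewrite addrACA.
move/ind => [E1 E2].
have Hp : p * (a * e - b * d) = 0.
  have -> : p * (a * e - b * d) = e * (p * a + r * d) - d * (p * b + r * e) by ring.
  by rewrite E1 E2; ring.
have Hr : r * (a * e - b * d) = 0.
  have -> : r * (a * e - b * d) = a * (p * b + r * e) - b * (p * a + r * d) by ring.
  by rewrite E1 E2; ring.
move: Hp Hr => /eqP; rewrite mulf_eq0 (negPf det) orbF => /eqP ->.
by move=> /eqP; rewrite mulf_eq0 (negPf det) orbF => /eqP ->.
Qed.

Lemma GlnM z w (a b d e : L) : Gln (mk2 z w) -> a * e - b * d != 0 ->
  Gln (mk2 (a *: z + b *: w) (d *: z + e *: w)).
Proof.
move=> /GlnE [ind t1 t2 [m1 m2 m3 m4]] det; apply/GlnE; split.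
- exact: indepM.
- by rewrite otrD t1 t2; ring.
- by rewrite otrD t1 t2; ring.
split; by rewrite omulDl !omulDr m1 m2 m3 m4 !(scaler0, addr0).
Qed.

End C.


Section D.
Variable L : finFieldType.
Implicit Types x y z w : 'rV[L]_8.

Definition Pen z y1 y2 :=
  [/\ (forall al be ga : L,
        [/\ otr (al *: z + be *: y1 + ga *: y2) = 0,
            onorm (al *: z + be *: y1 + ga *: y2) = 0 &
            omul z (al *: z + be *: y1 + ga *: y2) = 0]),
      (forall w, otr w = 0 -> omul z w = 0 ->
         exists al, exists be, exists ga, w = al *: z + be *: y1 + ga *: y2) &
      (forall al be ga : L, al *: z + be *: y1 + ga *: y2 = 0 -> [/\ al = 0, be = 0 & ga = 0])].

Lemma oc_lin (a b : L) x y (n : nat) : oc (a *: x + b *: y) n = a * oc x n + b * oc y n.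
Proof. by rewrite /oc !mxE. Qed.

Lemma Z_helper (u x : L) : u != 0 -> x * u = 0 -> x = 0.
Proof. by move=> hu /eqP; rewrite mulf_eq0 (negPf hu) orbF => /eqP. Qed.

Lemma ker_u1 (a u1 u2 u3 v1 v2 v3 b : L) d : u1 != 0 ->
  otr d = 0 -> omul (mk8 a u1 u2 u3 v1 v2 v3 b) d = 0 ->
  oc d 1 = 0 -> oc d 5 = 0 -> oc d 6 = 0 -> d = 0.
Proof.
move=> hu1 htr hm h1 h5 h6; rewrite [d]eta8 in htr hm *.
rewrite h1 h5 h6 otr_mk8 in htr hm *; rewrite omul_mk8 mk8_0 in hm.
move: (oc d 0) (oc d 2) (oc d 3) (oc d 4) (oc d 7) htr hm => d0 d2 d3 d4 d7.
move=> E; have -> : d7 = - d0 by apply/eqP; rewrite -addr_eq0 addrC E.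
move=> /mk8_inj [E0 E1 _ _ [_ E5 E6 _]].
have Z (x : L) : x * u1 = 0 -> x = 0.
  by move=> /eqP; rewrite mulf_eq0 (negPf hu1) orbF => /eqP.
have h0 : d0 = 0 by apply: Z; rewrite -[RHS]oppr0 -E1; ring.
have h3 : d3 = 0 by apply: Z; rewrite -[RHS]oppr0 -E5 h0; ring.
have h2 : d2 = 0 by apply: Z; rewrite -E6 h0; ring.
have h4 : d4 = 0 by apply: Z; rewrite -E0 h0; ring.
by rewrite h0 h2 h3 h4 oppr0 mk8_0.
Qed.

Lemma otrB x y : otr (x - y) = otr x - otr y.
Proof.
have E : x - y = 1 *: x + (-1) *: y by rewrite scale1r scaleN1r.
by rewrite E otrD; ring.
Qed.

Lemma omulBr z x y : omul z (x - y) = omul z x - omul z y.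
Proof.
have E : x - y = 1 *: x + (-1) *: y by rewrite scale1r scaleN1r.
by rewrite E omulDr scale1r scaleN1r.
Qed.

Lemma ocB x y (n : nat) : oc (x - y) n = oc x n - oc y n.
Proof. by rewrite /oc !mxE. Qed.

Lemma Pen_u1_mk8 (a u1 u2 u3 v2 v3 : L) : u1 != 0 ->
  exists y1, exists y2,
    Pen (mk8 a u1 u2 u3 ((- a^+2 - u2*v2 - u3*v3)/u1) v2 v3 (-a)) y1 y2.
Proof.
move=> hu1.
set z := mk8 _ _ _ _ _ _ _ _.
pose y1 := mk8 (-(u1*v2)) 0 (u1*a + v2*v3) (-(v2^+2)) (-(u1*u3) + a*v2) 0 (u1^+2) (u1*v2).
pose y2 := mk8 (-(u1*v3)) 0 (v3^+2) (u1*a - v2*v3) (u1*u2 + a*v3) (-(u1^+2)) 0 (u1*v3).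
have P1 (al be ga : L) :
        [/\ otr (al *: z + be *: y1 + ga *: y2) = 0,
            onorm (al *: z + be *: y1 + ga *: y2) = 0 &
            omul z (al *: z + be *: y1 + ga *: y2) = 0].
{ rewrite /z /y1 /y2 !scale_mk8 !add_mk8 otr_mk8 onorm_mk8 omul_mk8 mk8_0.
  split; last congr mk8.
  all: field.
  all: try exact hu1. all: done. }
exists y1, y2; split => //.
  move=> w tw mw.
  exists (oc w 1 / u1), ((oc w 6 - (oc w 1 / u1) * v3) / u1^+2),
    (((oc w 1 / u1) * v2 - oc w 5) / u1^+2).
  apply/eqP; rewrite -subr_eq0; apply/eqP.
  have [P1a _ P1c] := P1 (oc w 1 / u1) ((oc w 6 - (oc w 1 / u1) * v3) / u1^+2)
    (((oc w 1 / u1) * v2 - oc w 5) / u1^+2).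
  apply: (@ker_u1 a u1 u2 u3 ((- a^+2 - u2*v2 - u3*v3)/u1) v2 v3 (-a) _ hu1).
  - by rewrite otrB tw P1a subr0.
  - by rewrite -/z omulBr mw P1c subr0.
  - rewrite ocB /z /y1 /y2 !scale_mk8 !add_mk8 oc_mk8 //=; field; exact hu1.
  - rewrite ocB /z /y1 /y2 !scale_mk8 !add_mk8 oc_mk8 //=; field; exact hu1.
  - rewrite ocB /z /y1 /y2 !scale_mk8 !add_mk8 oc_mk8 //=; field; exact hu1.
move=> al be ga; rewrite /z /y1 /y2 !scale_mk8 !add_mk8 mk8_0.
move=> /mk8_inj [_ E1 _ _ [_ E5 E6 _]].
have hu2 : u1 ^+ 2 != 0 by rewrite expf_eq0 negb_and hu1 orbT.
have hal : al = 0 by apply: (Z_helper hu1); rewrite -E1; ring.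
have hbe : be = 0 by apply: (Z_helper hu2); rewrite -E6 hal; ring.
have hga : ga = 0 by apply: (Z_helper hu2); rewrite -[RHS]oppr0 -E5 hal; ring.
by [].
Qed.

End D.


Section E.
Variable L : finFieldType.
Implicit Types x y z w : 'rV[L]_8.

Lemma Pen_u1 z : Qpt z -> oc z 1 != 0 -> exists y1, exists y2, Pen z y1 y2.
Proof.
move=> /and3P [_ /eqP tr /eqP nm] h1.
have Ez : z = mk8 (oc z 0) (oc z 1) (oc z 2) (oc z 3)
   ((- (oc z 0)^+2 - oc z 2 * oc z 5 - oc z 3 * oc z 6)/oc z 1) (oc z 5) (oc z 6) (- oc z 0).
  have E7 : oc z 7 = - oc z 0 by apply/eqP; rewrite -addr_eq0 addrC; apply/eqP; exact: tr.
  rewrite {1}[z]eta8; congr mk8 => //.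
  rewrite /onorm E7 in nm.
  apply: (mulIf h1); rewrite mulfVK //.
  by rewrite -[LHS]addr0 -nm; ring.
rewrite Ez; exact: Pen_u1_mk8.
Qed.

Section Transfer.
Variables (phi psi : 'rV[L]_8 -> 'rV[L]_8).
Hypothesis phiL : forall a b x y, phi (a *: x + b *: y) = a *: phi x + b *: phi y.
Hypothesis phiM : forall x y, phi (omul x y) = omul (phi x) (phi y).
Hypothesis phiT : forall x, otr (phi x) = otr x.
Hypothesis phiN : forall x, onorm (phi x) = onorm x.
Hypothesis psiK : forall x, psi (phi x) = x.
Hypothesis phiK : forall x, phi (psi x) = x.

Lemma phi0 : phi 0 = 0.
Proof. by move: (phiL 0 0 0 0); rewrite !scale0r !addr0 => ->. Qed.
Lemma psi0 : psi 0 = 0.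
Proof. by rewrite -{1}phi0 psiK. Qed.
Lemma phiD x y : phi (x + y) = phi x + phi y.
Proof. by move: (phiL 1 1 x y); rewrite !scale1r => ->. Qed.
Lemma phiZ a x : phi (a *: x) = a *: phi x.
Proof. by move: (phiL a 0 x x); rewrite !scale0r !addr0 => ->. Qed.
Lemma psiL a b x y : psi (a *: x + b *: y) = a *: psi x + b *: psi y.
Proof. by rewrite -{1}(phiK x) -{1}(phiK y) -phiL psiK. Qed.
Lemma psiD x y : psi (x + y) = psi x + psi y.
Proof. by move: (psiL 1 1 x y); rewrite !scale1r => ->. Qed.
Lemma psiZ a x : psi (a *: x) = a *: psi x.
Proof. by move: (psiL a 0 x x); rewrite !scale0r !addr0 => ->. Qed.

Lemma Qpt_phi z : Qpt z -> Qpt (phi z).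
Proof.
move=> /and3P [nz t n]; apply/and3P; split; rewrite ?phiT ?phiN //.
by apply: contra nz => /eqP E; rewrite -(psiK z) E psi0.
Qed.

Lemma Pen_transfer z y1 y2 : Pen (phi z) y1 y2 -> Pen z (psi y1) (psi y2).
Proof.
move=> [P1 P2 P3].
have Ec al be ga : phi (al *: z + be *: psi y1 + ga *: psi y2) =
    al *: phi z + be *: y1 + ga *: y2 by rewrite !phiD !phiZ !phiK.
split.
- move=> al be ga; have [H1 H2 H3] := P1 al be ga.
  split; first by rewrite -phiT Ec.
  + by rewrite -phiN Ec.
  + by rewrite -(psiK (omul _ _)) phiM Ec H3 psi0.
- move=> w tw mw.
  have t' : otr (phi w) = 0 by rewrite phiT.
  have m' : omul (phi z) (phi w) = 0 by rewrite -phiM mw phi0.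
  have [al [be [ga E]]] := P2 _ t' m'.
  exists al, be, ga.
  by rewrite -(psiK w) E !psiD !psiZ psiK.
- move=> al be ga E; apply: P3.
  by rewrite -Ec E phi0.
Qed.

End Transfer.

Definition cyc x := mk8 (oc x 0) (oc x 2) (oc x 3) (oc x 1) (oc x 5) (oc x 6) (oc x 4) (oc x 7).
Definition cycI x := mk8 (oc x 0) (oc x 3) (oc x 1) (oc x 2) (oc x 6) (oc x 4) (oc x 5) (oc x 7).
Definition dual x := mk8 (oc x 7) (- oc x 4) (- oc x 5) (- oc x 6) (- oc x 1) (- oc x 2) (- oc x 3) (oc x 0).

Ltac crunch := rewrite /cyc /cycI /dual; rewrite ?omul_mk8 ?lin_mk8 ?otr_mk8 ?onorm_mk8 !oc_mk8 //=
   ?omul_mk8 ?lin_mk8 ?otr_mk8 ?onorm_mk8.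

Lemma cycL a b x y : cyc (a *: x + b *: y) = a *: cyc x + b *: cyc y.
Proof. rewrite [x]eta8 [y]eta8 lin_mk8; crunch; congr mk8; ring. Qed.
Lemma cycM x y : cyc (omul x y) = omul (cyc x) (cyc y).
Proof. rewrite [x]eta8 [y]eta8; crunch; congr mk8; ring. Qed.
Lemma cycT x : otr (cyc x) = otr x.
Proof. rewrite [x]eta8; crunch; ring. Qed.
Lemma cycN x : onorm (cyc x) = onorm x.
Proof. rewrite [x]eta8; crunch; ring. Qed.
Lemma cycK x : cycI (cyc x) = x.
Proof. rewrite {2}[x]eta8; crunch. Qed.
Lemma cycIK x : cyc (cycI x) = x.
Proof. rewrite {2}[x]eta8; crunch. Qed.

Lemma cycIL a b x y : cycI (a *: x + b *: y) = a *: cycI x + b *: cycI y.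
Proof. rewrite [x]eta8 [y]eta8 lin_mk8; crunch; congr mk8; ring. Qed.
Lemma cycIM x y : cycI (omul x y) = omul (cycI x) (cycI y).
Proof. rewrite [x]eta8 [y]eta8; crunch; congr mk8; ring. Qed.
Lemma cycIT x : otr (cycI x) = otr x.
Proof. rewrite [x]eta8; crunch; ring. Qed.
Lemma cycIN x : onorm (cycI x) = onorm x.
Proof. rewrite [x]eta8; crunch; ring. Qed.

Lemma dualL a b x y : dual (a *: x + b *: y) = a *: dual x + b *: dual y.
Proof. rewrite [x]eta8 [y]eta8 lin_mk8; crunch; congr mk8; ring. Qed.
Lemma dualM x y : dual (omul x y) = omul (dual x) (dual y).
Proof. rewrite [x]eta8 [y]eta8; crunch; congr mk8; ring. Qed.
Lemma dualT x : otr (dual x) = otr x.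
Proof. rewrite [x]eta8; crunch; ring. Qed.
Lemma dualN x : onorm (dual x) = onorm x.
Proof. rewrite [x]eta8; crunch; ring. Qed.
Lemma dualK x : dual (dual x) = x.
Proof. rewrite {2}[x]eta8; crunch; congr mk8; ring. Qed.

End E.


Section F.
Variable L : finFieldType.
Implicit Types x y z w : 'rV[L]_8.

Lemma Pen_u z : Qpt z -> [|| oc z 1 != 0, oc z 2 != 0 | oc z 3 != 0] ->
  exists y1, exists y2, Pen z y1 y2.
Proof.
move=> qz; case: (boolP (oc z 1 != 0)) => [h|_] /=; first by move=> _; exact: Pen_u1.
case: (boolP (oc z 2 != 0)) => [h|_] /= h'.
  have q2 : Qpt (cyc z) by apply: (Qpt_phi (@cycL L) (@cycT L) (@cycN L) (@cycK L)).
  have h2 : oc (cyc z) 1 != 0 by rewrite /cyc oc_mk8.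
  have [y1 [y2 P]] := Pen_u1 q2 h2.
  exists (cycI y1), (cycI y2).
  exact: (Pen_transfer (@cycL L) (@cycM L) (@cycT L) (@cycN L) (@cycK L) (@cycIK L) P).
have q2 : Qpt (cycI z) by apply: (Qpt_phi (@cycIL L) (@cycIT L) (@cycIN L) (@cycIK L)).
have h2 : oc (cycI z) 1 != 0 by rewrite /cycI oc_mk8.
have [y1 [y2 P]] := Pen_u1 q2 h2.
exists (cyc y1), (cyc y2).
exact: (Pen_transfer (@cycIL L) (@cycIM L) (@cycIT L) (@cycIN L) (@cycIK L) (@cycK L) P).
Qed.

Lemma Pen_exists z : Qpt z -> exists y1, exists y2, Pen z y1 y2.
Proof.
move=> qz.
case: (boolP [|| oc z 1 != 0, oc z 2 != 0 | oc z 3 != 0]) => [h|hu]; first exact: Pen_u.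
case: (boolP [|| oc z 4 != 0, oc z 5 != 0 | oc z 6 != 0]) => [h|hv].
  have q2 : Qpt (dual z) by apply: (Qpt_phi (@dualL L) (@dualT L) (@dualN L) (@dualK L)).
  have h2 : [|| oc (dual z) 1 != 0, oc (dual z) 2 != 0 | oc (dual z) 3 != 0].
    by rewrite /dual !oc_mk8 //= !oppr_eq0.
  have [y1 [y2 P]] := Pen_u q2 h2.
  exists (dual y1), (dual y2).
  exact: (Pen_transfer (@dualL L) (@dualM L) (@dualT L) (@dualN L) (@dualK L) (@dualK L) P).
exfalso; move: qz hu hv => /and3P [nz /eqP tr /eqP nm].
rewrite !negb_or !negbK => /and3P [/eqP u1 /eqP u2 /eqP u3] /and3P [/eqP v1 /eqP v2 /eqP v3].
have E7 : oc z 7 = - oc z 0 by apply/eqP; rewrite -addr_eq0 addrC; apply/eqP; exact: tr.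
move: nm; rewrite /onorm u1 u2 u3 E7 !mul0r !addr0 subr0 mulrN => /eqP.
rewrite oppr_eq0 mulf_eq0 orbb => /eqP z0.
move/negP: nz; apply; apply/eqP.
by rewrite [z]eta8 u1 u2 u3 v1 v2 v3 E7 z0 oppr0 mk8_0.
Qed.

End F.


Section G.
Variable L : finFieldType.
Implicit Types x y z w : 'rV[L]_8.

Definition Kset (s1 s2 : L) := [set p : L * L | p.1 * s1 + p.2 * s2 == 0].

Lemma K_card (s1 s2 : L) :
  #|Kset s1 s2| = if (s1 == 0) && (s2 == 0) then (#|L| * #|L|)%N else #|L|.
Proof.
case: (boolP (s2 == 0)) => [/eqP h2|h2]; last first.
  rewrite andbF.
  have -> : Kset s1 s2 = [set (b, - (b * s1) / s2) | b in [set: L]].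
    apply/setP => [[b g]]; rewrite !inE /=; apply/eqP/imsetP.
      move=> E; exists b; rewrite ?inE //; congr (_, _).
      apply: (mulIf h2); rewrite mulfVK //; apply/eqP; by rewrite -addr_eq0 addrC E.
    by case=> b' _ [-> ->]; rewrite mulfVK //; ring.
  by rewrite card_imset ?cardsT // => b b' [].
case: (boolP (s1 == 0)) => [/eqP h1|h1] /=.
  have -> : Kset s1 s2 = [set: L * L].
    by apply/setP => p; rewrite !inE h1 h2 !mulr0 addr0 eqxx.
  by rewrite cardsT card_prod.
have -> : Kset s1 s2 = [set (0, g) | g in [set: L]].
  apply/setP => [[b g]]; rewrite !inE /= h2 mulr0 addr0; apply/idP/imsetP.
    rewrite mulf_eq0 (negPf h1) orbF => /eqP ->; by exists g.
  by case=> g' _ [-> _]; rewrite mul0r.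
by rewrite card_imset ?cardsT // => b b' [].
Qed.

Definition comb z y1 y2 (t : L * (L * L)) := t.1 *: z + t.2.1 *: y1 + t.2.2 *: y2.

Lemma opp_mk8 a0 a1 a2 a3 a4 a5 a6 a7 :
  - mk8 a0 a1 a2 a3 a4 a5 a6 a7 = mk8 (-a0) (-a1) (-a2) (-a3) (-a4) (-a5) (-a6) (-a7) :> 'rV[L]_8.
Proof. by apply/rowP => i; rewrite !mxE; case: i => [[|[|[|[|[|[|[|[|//]]]]]]]] Hi]. Qed.

Lemma comb_sub z y1 y2 t t' :
  comb z y1 y2 t - comb z y1 y2 t' =
  (t.1 - t'.1) *: z + (t.2.1 - t'.2.1) *: y1 + (t.2.2 - t'.2.2) *: y2.
Proof.
rewrite /comb [z]eta8 [y1]eta8 [y2]eta8 !scale_mk8 !add_mk8 opp_mk8 add_mk8.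
congr mk8; ring.
Qed.

Lemma comb_lin z y1 y2 (l m : L) t :
  l *: z + m *: comb z y1 y2 t = (l + m * t.1) *: z + (m * t.2.1) *: y1 + (m * t.2.2) *: y2.
Proof.
rewrite /comb [z]eta8 [y1]eta8 [y2]eta8 !scale_mk8 !add_mk8 !scale_mk8 add_mk8.
congr mk8; ring.
Qed.

Lemma card_pencil z y1 y2 (Fw : 'rV[L]_8 -> L) (s1 s2 : L) :
  Qpt z -> Pen z y1 y2 ->
  (forall t, Fw (comb z y1 y2 t) = t.2.1 * s1 + t.2.2 * s2) ->
  #|[set w | Gln (mk2 z w) && (Fw w == 0)]| = (#|L| * (#|Kset s1 s2|).-1)%N.
Proof.
move=> /and3P [nz /eqP tz /eqP nz0] [P1 P2 P3] HF.
have inj : injective (comb z y1 y2).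
  move=> t t' E; move: (P3 (t.1 - t'.1) (t.2.1 - t'.2.1) (t.2.2 - t'.2.2)).
  rewrite -comb_sub E subrr => /(_ erefl) [h1 h2 h3]; clear E.
  move: t t' h1 h2 h3 => [a [b g]] [a' [b' g']] /= /subr0_eq -> /subr0_eq -> /subr0_eq -> //.
have -> : [set w | Gln (mk2 z w) && (Fw w == 0)] =
    comb z y1 y2 @: [set t | (t.2 != (0, 0)) && (t.2.1 * s1 + t.2.2 * s2 == 0)].
  apply/setP => w; rewrite !inE; apply/andP/imsetP.
    move=> [/GlnE2 [ind _ tw [_ _ mw]] /eqP fw].
    have [al [be [ga Ew]]] := P2 w tw mw.
    exists (al, (be, ga)); last by [].
    rewrite inE /=; apply/andP; split; last by move: (HF (al, (be, ga))); rewrite /comb /= -Ew fw => <-.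
    apply/negP => /eqP [eb eg].
    have : al *: z + (-1) *: w = 0 by rewrite Ew eb eg !scale0r !addr0 scaleN1r subrr.
    by move/ind => [_ /eqP]; rewrite oppr_eq0 oner_eq0.
  case=> [[a [b g]]]; rewrite inE /= => /andP [nt0 ft] ->; split; last by rewrite HF.
  have [t1 n1 m1] := P1 a b g.
  apply/GlnE2; split; [|done|done|by split].
  move=> l m; rewrite (comb_lin z y1 y2 l m (a, (b, g))) /= => /P3 [hl hb hg].
  have hm : m = 0.
    move: nt0; apply: contraNeq => mn0; apply/eqP; congr (_, _).
      by move/eqP: hb; rewrite mulf_eq0 (negPf mn0) => /eqP.
    by move/eqP: hg; rewrite mulf_eq0 (negPf mn0) => /eqP.
  by move: hl; rewrite hm mul0r addr0.
rewrite card_imset //.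
have -> : [set t : L * (L * L) | (t.2 != (0, 0)) && (t.2.1 * s1 + t.2.2 * s2 == 0)] =
    setX [set: L] (Kset s1 s2 :\ (0, 0)).
  by apply/setP => [[a p]]; rewrite !inE.
rewrite cardsX cardsT; congr (_ * _)%N.
by rewrite [in RHS](cardsD1 (0, 0) (Kset s1 s2)) inE /= !mul0r addr0 eqxx.
Qed.

End G.


Section H.
Variable L : finFieldType.
Variable c : 'I_8 -> 'I_8 -> 'I_8 -> L.
Implicit Types x y z w : 'rV[L]_8.
Local Notation sec := (sec_eval c).

Lemma gln_comb z y1 y2 a b g : Qpt z -> Pen z y1 y2 -> (b, g) != (0, 0) ->
  Gln (mk2 z (comb z y1 y2 (a, (b, g)))).
Proof.
move=> /and3P [nz /eqP tz /eqP nz0] [P1 P2 P3] nt0.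
have [t1 n1 m1] := P1 a b g.
apply/GlnE2; split; [|done|done|by split].
move=> l m; rewrite (comb_lin z y1 y2 l m (a, (b, g))) /= => /P3 [hl hb hg].
have hm : m = 0.
  move: nt0; apply: contraNeq => mn0; apply/eqP; congr (_, _).
    by move/eqP: hb; rewrite mulf_eq0 (negPf mn0) => /eqP.
  by move/eqP: hg; rewrite mulf_eq0 (negPf mn0) => /eqP.
by move: hl; rewrite hm mul0r addr0.
Qed.

Lemma Gln_Qpt z w : Gln (mk2 z w) -> Qpt z.
Proof.
move=> /GlnE2 [ind tz _ [nz _ _]]; apply/and3P; split; rewrite ?tz ?nz //.
apply/negP => /eqP z0; have : 1 *: z + 0 *: w = 0 by rewrite z0 scaler0 scale0r addr0.
by move/ind => [/eqP]; rewrite oner_eq0.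
Qed.

Lemma secA2 x w p r : sec x w (p + r) = sec x w p + sec x w r.
Proof. by move: (secD2 c 1 1 p r x w); rewrite !scale1r !mul1r. Qed.
Lemma secZ2 x w a p : sec x w (a *: p) = a * sec x w p.
Proof. by move: (secD2 c a 0 p p x w); rewrite scale0r addr0 mul0r addr0. Qed.

Lemma sec_comb z y1 y2 t :
  sec z z (comb z y1 y2 t) = t.2.1 * sec z z y1 + t.2.2 * sec z z y2.
Proof. by rewrite /comb !secA2 !secZ2 sec_alt mulr0 add0r. Qed.

Lemma XcondE z : Xcond c z <-> Qpt z /\ (forall w, Gln (mk2 z w) -> sec z z w = 0).
Proof.
split.
  move=> /andP [qz /forallP H]; split => // w gw.
  have zA : (z <= mk2 z w)%MS by move: (row_sub ord0 (mk2 z w)); rewrite mk2_row0.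
  by move: (H (mk2 z w)); rewrite gw zA mk2_row0 mk2_row1 /= => /eqP.
move=> [qz H]; apply/andP; split => //; apply/forallP => A; apply/implyP => /andP [gA zA].
rewrite [A]mk2_eta in gA zA; move: (row ord0 A) (row ord_max A) gA zA => r0 r1 gA zA.
apply/eqP; case/submxP: zA => D; rewrite mulmx_mk2 => Ez.
case: (boolP (D 0 0 == 0)) => [/eqP a0|a0].
  have b0 : D 0 1 != 0.
    apply: contraTneq qz => b0; rewrite Ez a0 b0 !scale0r addr0.
    by rewrite /Qpt eqxx.
  have g2 : Gln (mk2 z r0).
    have Ez' : z = 0 *: r0 + D 0 1 *: r1 by rewrite Ez a0.
    move: (GlnM (a:=0) (b:=D 0 1) (d:=1) (e:=0) gA); rewrite -Ez' scale1r scale0r addr0.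
    by apply; rewrite !mul0r mulr1 sub0r oppr_eq0.
  move: (sec_basis c (D 0 0) (D 0 1) 1 0 z r0 r1); rewrite -Ez scale1r scale0r addr0 (H _ g2).
  move/esym/eqP; rewrite a0 !mul0r mulr1 sub0r mulf_eq0 oppr_eq0 (negPf b0) /= => /eqP.
  by [].
have g2 : Gln (mk2 z r1).
  move: (GlnM (a:=D 0 0) (b:=D 0 1) (d:=0) (e:=1) gA); rewrite -Ez scale1r scale0r add0r.
  by apply; rewrite mulr1 mulr0 subr0.
move: (sec_basis c (D 0 0) (D 0 1) 0 1 z r0 r1); rewrite -Ez scale1r scale0r add0r (H _ g2).
move/esym/eqP; rewrite mulr1 mulr0 subr0 mulf_eq0 (negPf a0) /= => /eqP.
by [].
Qed.

End H.


Section I.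
Variable L : finFieldType.
Variable c : 'I_8 -> 'I_8 -> 'I_8 -> L.
Implicit Types x y z w : 'rV[L]_8.
Local Notation sec := (sec_eval c).

Lemma countE' z : Qpt z -> #|[set w | Gln (mk2 z w)]| = (#|L| * (#|L| * #|L|).-1)%N.
Proof.
move=> qz; have [y1 [y2 P]] := Pen_exists qz.
have H := @card_pencil L z y1 y2 (fun _ => 0) 0 0 qz P.
rewrite K_card in H; move: H; rewrite eqxx /= => H.
rewrite -H; last by move=> t; rewrite !mulr0 addr0.
by apply: eq_card => w; rewrite !inE ?eqxx andbT.
Qed.

Lemma countE z : Qpt z ->
  #|[set w | Gln (mk2 z w) && (sec z z w == 0)]| =
  if Xcond c z then (#|L| * (#|L| * #|L|).-1)%N else (#|L| * #|L|.-1)%N.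
Proof.
move=> qz; have [y1 [y2 P]] := Pen_exists qz.
rewrite (card_pencil qz P (sec_comb c z y1 y2)) K_card.
have -> : Xcond c z = (sec z z y1 == 0) && (sec z z y2 == 0); last by case: ifP.
apply/idP/idP.
  move=> /XcondE [_ H].
  have ne10 : ((1 : L), (0 : L)) != (0, 0) by apply/eqP => -[/eqP]; rewrite oner_eq0.
  have ne01 : ((0 : L), (1 : L)) != (0, 0) by apply/eqP => -[/eqP]; rewrite oner_eq0.
  move: (H _ (@gln_comb L z y1 y2 0 1 0 qz P ne10)) (H _ (@gln_comb L z y1 y2 0 0 1 qz P ne01)).
  rewrite !sec_comb /= !mul1r !mul0r addr0 add0r => -> ->.
  by rewrite eqxx.
move=> /andP [/eqP h1 /eqP h2]; apply/XcondE; split => // w gw.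
move: gw => /GlnE2 [_ _ tw [_ _ mw]].
case: P => [_ P2 _]; have [al [be [ga ->]]] := P2 w tw mw.
by move: (sec_comb c z y1 y2 (al, (be, ga))); rewrite /comb /= h1 h2 !mulr0 addr0.
Qed.

Lemma card_M2 (P : 'M[L]_(2, 8) -> bool) :
  #|[set A | P A]| = (\sum_(z : 'rV[L]_8) #|[set w | P (mk2 z w)]|)%N.
Proof.
rewrite -(card_pairs (fun z w => P (mk2 z w))).
have inj : injective (fun p : 'rV[L]_8 * 'rV[L]_8 => mk2 p.1 p.2).
  move=> [z w] [z' w'] /= E.
  by move: (congr1 (row ord0) E) (congr1 (row ord_max) E); rewrite !mk2_row0 !mk2_row1 => -> ->.
rewrite -(card_imset _ inj); apply: eq_card => A; rewrite inE.
apply/idP/imsetP.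
  by move=> PA; exists (row ord0 A, row ord_max A); rewrite ?inE /= -mk2_eta.
by case=> [[z w]]; rewrite inE /= => + ->.
Qed.

Definition Qset := [set z : 'rV[L]_8 | Qpt z].
Definition Xset := [set z : 'rV[L]_8 | Xcond c z].
Definition QnXset := [set z : 'rV[L]_8 | Qpt z && ~~ Xcond c z].

Lemma Xcond_Qpt z : Xcond c z -> Qpt z.
Proof. by case/andP. Qed.

Lemma Gm_count : #|[set A : 'M[L]_(2, 8) | Gln A]| = (#|Qset| * (#|L| * (#|L| * #|L|).-1))%N.
Proof.
rewrite card_M2 mulnC -sum_if; apply: eq_bigr => z _.
case: ifP => qz; first exact: countE'.
apply/eqP; rewrite cards_eq0; apply/eqP/setP => w; rewrite !inE.
by apply/negP => /Gln_Qpt; rewrite qz.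
Qed.

Lemma T2_count :
  #|[set A : 'M[L]_(2, 8) | Gln A && (sec (row ord0 A) (row ord0 A) (row ord_max A) == 0)]| =
  (#|L| * (#|L| * #|L|).-1 * #|Xset| + #|L| * #|L|.-1 * #|QnXset|)%N.
Proof.
rewrite card_M2 -!sum_if -big_split /=; apply: eq_bigr => z _.
rewrite (eq_card (B := [set w | Gln (mk2 z w) && (sec z z w == 0)])); last first.
  by move=> w; rewrite !inE mk2_row0 mk2_row1.
case: (boolP (Qpt z)) => qz.
  by rewrite countE //; case: (Xcond c z); rewrite /= ?addn0.
have nx : Xcond c z = false by apply/negP => /Xcond_Qpt; rewrite (negPf qz).
rewrite nx /= add0n.
apply/eqP; rewrite cards_eq0; apply/eqP/setP => w; rewrite !inE.
by apply/negP => /andP [/Gln_Qpt]; rewrite (negPf qz).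
Qed.

End I.


Lemma det2E (R : comNzRingType) (g : 'M[R]_2) : \det g = g 0 0 * g 1 1 - g 0 1 * g 1 0.
Proof.
rewrite (expand_det_row _ 0) !big_ord_recl big_ord0 addr0 /cofactor !det_mx11 !mxE /=.
rewrite !expr0 !mul1r.
have E1 : (lift 0 (0 : 'I_1) : 'I_2) = 1 by apply: val_inj.
have E2 : (lift ord0 ord0 : 'I_2) = 1 by apply: val_inj.
have E3 : (lift (lift ord0 ord0) (0 : 'I_1) : 'I_2) = 0 by apply: val_inj.
have E4 : (lift ord0 (0 : 'I_1) : 'I_2) = 1 by apply: val_inj.
rewrite ?E1 ?E2 ?E3 ?E4.
have E5 : (lift 1 (0 : 'I_1) : 'I_2) = 0 by apply: val_inj.
have E6 : (ord0 : 'I_2) = 0 by [].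
rewrite E5 E6 /bump /= expr1; ring.
Qed.

Section J.
Variable L : finFieldType.
Implicit Types x y z w : 'rV[L]_8.

Definition det2 (g : 'M[L]_2) := g 0 0 * g 1 1 - g 0 1 * g 1 0.

Lemma unit2E (g : 'M[L]_2) : (g \in unitmx) = (det2 g != 0).
Proof. by rewrite unitmxE unitfE det2E. Qed.

Definition mx22 (p : (L * L) * (L * L)) : 'M[L]_2 :=
  \matrix_(i < 2, j < 2) if i == 0 then (if j == 0 then p.1.1 else p.1.2)
                         else (if j == 0 then p.2.1 else p.2.2).

Lemma mx22E p : [/\ mx22 p 0 0 = p.1.1, mx22 p 0 1 = p.1.2, mx22 p 1 0 = p.2.1 & mx22 p 1 1 = p.2.2].
Proof. by rewrite !mxE. Qed.

Lemma mx22_inj : injective mx22.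
Proof.
move=> [[a b] [d e]] [[a' b'] [d' e']] E.
have [E0 E1 E2 E3] := mx22E ((a, b), (d, e)).
have [F0 F1 F2 F3] := mx22E ((a', b'), (d', e')).
by move: E0 E1 E2 E3; rewrite E F0 F1 F2 F3 /= => -> -> -> ->.
Qed.

Lemma mx22_eta (g : 'M[L]_2) : g = mx22 ((g 0 0, g 0 1), (g 1 0, g 1 1)).
Proof.
apply/matrixP => i j; rewrite !mxE.
by case: i => [[|[|//]] Hi]; case: j => [[|[|//]] Hj] /=; congr (g _ _); apply: val_inj.
Qed.

Lemma card_M22 (P : 'M[L]_2 -> bool) :
  #|[set g | P g]| = #|[set p | P (mx22 p)]|.
Proof.
rewrite -(card_imset _ mx22_inj); apply: eq_card => g; rewrite inE.
apply/idP/imsetP.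
  by move=> Pg; exists ((g 0 0, g 0 1), (g 1 0, g 1 1)); rewrite ?inE -?mx22_eta.
by case=> p; rewrite inE => + ->.
Qed.

Lemma card_row_free_cond (r : L * L) :
  #|[set s : L * L | r.1 * s.2 - r.2 * s.1 != 0]| =
  if r == (0, 0) then 0%N else (#|L| * #|L| - #|L|)%N.
Proof.
have -> : [set s : L * L | r.1 * s.2 - r.2 * s.1 != 0] = ~: Kset (- r.2) r.1.
  apply/setP => s; rewrite !inE; congr (~~ _).
  by apply/eqP/eqP => E; rewrite -E; ring.
have := cardsC (Kset (- r.2) r.1); rewrite card_prod K_card oppr_eq0.
case: r => a b /=.
case: (boolP ((b == 0) && (a == 0))) => [/andP [/eqP -> /eqP ->]|h].
  by rewrite eqxx => /eqP; rewrite -[X in _ == X]addn0 eqn_add2l => /eqP.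
have -> : ((a, b) == (0, 0)) = false.
  by apply/negP => /eqP [ha hb]; move: h; rewrite ha hb eqxx.
by move=> <-; rewrite addKn.
Qed.

Lemma card_units_cond (a b : L) :
  #|[set g : 'M[L]_2 | (g \in unitmx) && (g 0 0 * a + g 0 1 * b == 0)]| =
  ((#|L| * #|L| - #|L|) * (#|Kset a b|).-1)%N.
Proof.
rewrite card_M22.
rewrite (eq_card (B := [set p : (L * L) * (L * L) |
   (p.1.1 * p.2.2 - p.1.2 * p.2.1 != 0) && (p.1.1 * a + p.1.2 * b == 0)])); last first.
  by move=> p; rewrite !inE unit2E /det2 !mxE.
rewrite (card_pairs (fun r s => (r.1 * s.2 - r.2 * s.1 != 0) && (r.1 * a + r.2 * b == 0))).
rewrite (eq_bigr (fun r => if (r \in Kset a b) && (r != (0, 0)) then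
                          (#|L| * #|L| - #|L|)%N else 0%N)); last first.
  move=> r _; rewrite /Kset inE.
  case: (boolP (r.1 * a + r.2 * b == 0)) => hr /=.
    rewrite (eq_card (B := [set s : L * L | r.1 * s.2 - r.2 * s.1 != 0])); last first.
      by move=> s; rewrite !inE /= andbT.
    by apply: etrans (card_row_free_cond r) _; case: (r == (0, 0)).
  apply/eqP; rewrite cards_eq0; apply/eqP/setP => s.
  by rewrite !inE andbF.
rewrite sum_if; congr (_ * _)%N.
rewrite [in RHS](cardsD1 (0, 0) (Kset a b)) inE /= !mul0r addr0 eqxx /=.
by apply: eq_card => r; rewrite !inE andbC.
Qed.

End J.


Section K.
Variable L : finFieldType.
Variable c : 'I_8 -> 'I_8 -> 'I_8 -> L.
Implicit Types x y z w : 'rV[L]_8.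
Local Notation sec := (sec_eval c).

Lemma ordmax2 : (ord_max : 'I_2) = 1. Proof. by apply: val_inj. Qed.

Lemma row_gA (g : 'M[L]_2) (A : 'M[L]_(2, 8)) (i : 'I_2) :
  row i (g *m A) = g i 0 *: row ord0 A + g i 1 *: row ord_max A.
Proof. by rewrite row_mul {1}[A]mk2_eta mulmx_mk2 !mxE. Qed.

Lemma GlnU (g : 'M[L]_2) A : g \in unitmx -> Gln A -> Gln (g *m A).
Proof.
rewrite unit2E => hg gA; rewrite [g *m A]mk2_eta !row_gA ordmax2.
rewrite [A]mk2_eta ordmax2 in gA.
by apply: (GlnM (a := g 0 0) (b := g 0 1) (d := g 1 0) (e := g 1 1) gA).
Qed.

Definition aF (A : 'M[L]_(2, 8)) := sec (row ord0 A) (row ord0 A) (row ord_max A).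
Definition bF (A : 'M[L]_(2, 8)) := sec (row ord_max A) (row ord0 A) (row ord_max A).

Lemma aF_gA (g : 'M[L]_2) A : aF (g *m A) = det2 g * (g 0 0 * aF A + g 0 1 * bF A).
Proof.
rewrite /aF /bF !row_gA ordmax2 sec_basis secDx /det2.
by [].
Qed.

Lemma Gln_indep (A : 'M[L]_(2, 8)) : Gln A -> indep (row ord0 A) (row ord_max A).
Proof. by rewrite {1}[A]mk2_eta => /GlnE [ind _ _ _]. Qed.

Lemma indep_nz0 z w : indep z w -> z != 0.
Proof.
move=> ind; apply/negP => /eqP z0.
have : 1 *: z + 0 *: w = 0 by rewrite z0 scaler0 scale0r addr0.
by move/ind => [/eqP]; rewrite oner_eq0.
Qed.

Lemma indep_nz1 z w : indep z w -> w != 0.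
Proof.
move=> ind; apply/negP => /eqP w0.
have : 0 *: z + 1 *: w = 0 by rewrite w0 scaler0 scale0r addr0.
by move/ind => [_ /eqP]; rewrite oner_eq0.
Qed.

Lemma YcondE (A : 'M[L]_(2, 8)) : Ycond c A = [&& Gln A, aF A == 0 & bF A == 0].
Proof.
apply/idP/idP.
  case/andP => gA /forallP H; rewrite gA /=.
  have ind := Gln_indep gA.
  move: (H (row ord0 A)) (H (row ord_max A)).
  rewrite (indep_nz0 ind) (indep_nz1 ind) !row_sub /= => ha hb.
  by rewrite /aF /bF ha hb.
case/and3P => gA /eqP ha /eqP hb; rewrite /Ycond gA /=; apply/forallP => x.
apply/implyP => /andP [_ /submxP [D ->]].
rewrite {1}[A]mk2_eta mulmx_mk2 secDx.
by move: ha hb; rewrite /aF /bF => -> ->; rewrite !mulr0 addr0.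
Qed.

End K.


Section K2.
Variable L : finFieldType.
Variable c : 'I_8 -> 'I_8 -> 'I_8 -> L.
Local Notation sec := (sec_eval c).
Local Notation q := #|L|.

Definition U2set := [set g : 'M[L]_2 | g \in unitmx].
Definition T2set := [set A : 'M[L]_(2, 8) | Gln A && (aF c A == 0)].
Definition Yset := [set A : 'M[L]_(2, 8) | Ycond c A].
Definition GnYset := [set A : 'M[L]_(2, 8) | Gln A && ~~ Ycond c A].

Lemma U2_card : #|U2set| = ((q * q - q) * (q * q).-1)%N.
Proof.
have := card_units_cond (0 : L) 0; rewrite K_card eqxx /= => <-.
by apply: eq_card => g; rewrite !inE !mulr0 addr0 eqxx andbT.
Qed.

Lemma stepA : (#|U2set| * #|T2set|)%N =
  #|[set p : 'M[L]_(2, 8) * 'M[L]_2 | Gln p.1 && (p.2 \in unitmx) && (aF c (p.2 *m p.1) == 0)]|.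
Proof.
rewrite -cardsX.
set D := [set p : 'M[L]_(2, 8) * 'M[L]_2 | _].
pose h := fun p : 'M[L]_(2, 8) * 'M[L]_2 => (p.2, p.2 *m p.1).
have hinj : {in D &, injective h}.
  move=> [A g] [A' g'] /=; rewrite !inE /= => /andP [/andP [_ ug] _] _ [eg].
  by rewrite -eg => /(can_inj (mulKmx ug)) ->.
rewrite -(card_in_imset hinj); apply: eq_card => [[g B]].
rewrite !inE /=; apply/andP/imsetP.
  move=> [ug /andP [gB aB]].
  exists (invmx g *m B, g); last by rewrite /h /= mulKVmx.
  rewrite inE /= mulKVmx // aB andbT.
  by rewrite GlnU ?unitmx_inv.
case=> [[A g']]; rewrite inE /= => /andP [/andP [gA ug] aA] [-> ->].
by rewrite ug GlnU.
Qed.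

Lemma stepB :
  #|[set p : 'M[L]_(2, 8) * 'M[L]_2 | Gln p.1 && (p.2 \in unitmx) && (aF c (p.2 *m p.1) == 0)]|
  = (((q * q - q) * (q * q).-1) * #|Yset| + ((q * q - q) * q.-1) * #|GnYset|)%N.
Proof.
rewrite (card_pairs (fun A g => Gln A && (g \in unitmx) && (aF c (g *m A) == 0))).
rewrite -!sum_if -big_split /=; apply: eq_bigr => A _ /=.
case: (boolP (Gln A)) => gA; last first.
  have -> : Ycond c A = false by rewrite YcondE (negPf gA).
  apply/eqP; rewrite cards_eq0; apply/eqP/setP => g.
  by rewrite !inE.
transitivity #|[set g : 'M[L]_2 | (g \in unitmx) && (g 0 0 * aF c A + g 0 1 * bF c A == 0)]|.
  apply: eq_card => g; rewrite !inE /= aF_gA.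
  case: (boolP (g \in unitmx)) => //= ug.
  by move: ug; rewrite unit2E => ug; rewrite mulf_eq0 (negPf ug).
rewrite card_units_cond K_card YcondE gA /=.
by case: ((aF c A == 0) && (bF c A == 0)); rewrite /= ?addn0.
Qed.

Lemma Y_count : (#|U2set| * #|T2set|)%N =
  (#|U2set| * #|Yset| + ((q * q - q) * q.-1) * #|GnYset|)%N.
Proof. by rewrite stepA stepB U2_card. Qed.

End K2.


Section Q.
Variable L : finFieldType.

Lemma quot_card m n (P : pred 'M[L]_(m, n)) :
  (forall A, P A -> row_free A) ->
  (forall A g, g \in unitmx -> P A -> P (g *m A)) ->
  #|[set A | P A]| = (#|[set g : 'M[L]_m | g \in unitmx]| *
                      #|(fun A : 'M[L]_(m, n) => (<<A>>%MS : 'M[L]_n)) @: [set A | P A]|)%N.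
Proof.
move=> Pfree Pinv.
rewrite -sum1_card (partition_big_imset (fun A : 'M[L]_(m, n) => (<<A>>%MS : 'M[L]_n))) /=.
rewrite mulnC -sum_nat_const; apply: eq_bigr => Y /imsetP [A0 hA0 ->].
rewrite inE in hA0.
rewrite sum1dep_card -(card_imset _ (row_free_inj (Pfree _ hA0))).
apply: eq_card => A; rewrite !inE; apply/andP/imsetP.
  move=> [PA /eqP /genmxP /eqmxMunitP [g ug ->]].
  by exists g; rewrite ?inE.
move=> [g]; rewrite inE => ug ->; split; first exact: Pinv.
by apply/eqP/genmxP/eqmxMunitP; exists g.
Qed.

End Q.


Section M.
Variable L : finFieldType.
Variable c : 'I_8 -> 'I_8 -> 'I_8 -> L.
Local Notation sec := (sec_eval c).

Lemma U1_card : #|[set g : 'M[L]_1 | g \in unitmx]| = #|L|.-1.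
Proof.
have inj : injective (fun a : L => (a%:M : 'M[L]_1)).
  by apply: (can_inj (g := fun g : 'M[L]_1 => g 0 0)) => a; rewrite mxE eqxx mulr1n.
rewrite -(cardC1 (0 : L)) -(card_imset _ inj); apply: eq_card => g; rewrite !inE.
rewrite unitmxE det_mx11 unitfE; apply/idP/imsetP.
  by move=> h; exists (g 0 0); rewrite ?inE // {1}[g]mx11_scalar.
by case=> a; rewrite !inE => h ->; rewrite mxE eqxx mulr1n.
Qed.

Lemma Xcond_inv (x : 'rV[L]_8) (g : 'M[L]_1) : g \in unitmx -> Xcond c x -> Xcond c (g *m x).
Proof.
rewrite unitmxE det_mx11 unitfE => hg.
rewrite {1}[g]mx11_scalar mul_scalar_mx; set a := g 0 0.
case/andP => /and3P [nz /eqP tz /eqP nmz] /forallP H.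
apply/andP; split.
  apply/and3P; split.
  - by rewrite scaler_eq0 negb_or hg.
  - by rewrite otrZ tz mulr0.
  - by rewrite onormZ nmz mulr0.
apply/forallP => A; apply/implyP => /andP [gA xA].
have xA' : (x <= A)%MS by rewrite -(eqmx_scale _ hg).
by move: (H A); rewrite gA xA' /= secZx => /eqP ->; rewrite mulr0.
Qed.

Lemma Xcond_free (x : 'rV[L]_8) : Xcond c x -> row_free x.
Proof. by case/andP => /and3P [nz _ _] _; rewrite /row_free rank_rV nz. Qed.

Lemma Ycond_inv (A : 'M[L]_(2, 8)) (g : 'M[L]_2) : g \in unitmx -> Ycond c A -> Ycond c (g *m A).
Proof.
move=> ug /andP [gA /forallP H]; apply/andP; split; first exact: GlnU.
apply/forallP => x; apply/implyP => /andP [nx xA].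
have xA' : (x <= A)%MS by apply: submx_trans xA (submxMl _ _).
move: (H x); rewrite nx xA' /= => /eqP h0.
by rewrite !row_gA ordmax2 sec_basis -ordmax2 h0 mulr0.
Qed.

Lemma Ycond_free (A : 'M[L]_(2, 8)) : Ycond c A -> row_free A.
Proof. by case/andP => /and5P []. Qed.

Lemma Xpts_eq : Xpts c = (fun A : 'M[L]_(1, 8) => (<<A>>%MS : 'M[L]_8)) @: [set x | Xcond c x].
Proof.
apply/setP => Y; apply/imsetP/imsetP => -[x hx ->]; exists x => //; move: hx; rewrite !inE //.
Qed.

Lemma Ypts_eq : Ypts c = (fun A : 'M[L]_(2, 8) => (<<A>>%MS : 'M[L]_8)) @: [set A | Ycond c A].
Proof.
apply/setP => Y; apply/imsetP/imsetP => -[x hx ->]; exists x => //; move: hx; rewrite !inE //.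
Qed.

Theorem main_count : #|Xpts c| = #|Ypts c|.
Proof.
have hX := quot_card Xcond_free Xcond_inv.
have hY := quot_card Ycond_free Ycond_inv.
rewrite -Xpts_eq U1_card in hX; rewrite -Ypts_eq -/(U2set L) U2_card in hY.
have hG := Gm_count L.
have hT := T2_count c.
have hYc := Y_count c; rewrite U2_card in hYc.
have hQ : #|Qset L| = (#|Xset c| + #|QnXset c|)%N.
  rewrite -(cardsID (Xset c) (Qset L)); congr (_ + _)%N; apply: eq_card => z;
  rewrite !inE; case: (boolP (Xcond c z)) => hz; rewrite ?andbT ?andbF ?andbT //=.
    by rewrite (Xcond_Qpt hz).
have hGl : #|[set A : 'M[L]_(2, 8) | Gln A]| = (#|Yset c| + #|GnYset c|)%N.
  rewrite -(cardsID (Yset c) [set A : 'M[L]_(2, 8) | Gln A]); congr (_ + _)%N;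
  apply: eq_card => A; rewrite !inE; case: (boolP (Ycond c A)) => hA; rewrite ?andbT ?andbF //=.
    by move: hA; rewrite YcondE => /and3P [].
have hq : (1 < #|L|)%N.
  by apply/card_gt1P; exists 0, 1; rewrite !inE; split => //; rewrite eq_sym oner_neq0.
have ET : #|T2set c| = (#|L| * (#|L| * #|L|).-1 * #|Xset c| + #|L| * #|L|.-1 * #|QnXset c|)%N.
  exact: hT.
rewrite ET in hYc.
rewrite /Xset in hQ ET hYc; rewrite /Yset in hGl hYc.
move: hX hY hG hYc hQ hGl hq.
set X := #|[set x | Xcond c x]|; set Y := #|[set x | Ycond c x]|.
set Xp := #|_ @: _|; set Yp := #|_ @: _|.
set Q := #|Qset L|; set QX := #|QnXset c|; set GY := #|GnYset c|.
set G := #|[set A | Gln A]|.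
case: #|L| => [//|n]; case: n => [//|n].
move=> hX hY hG hYc hQ hGl _.
rewrite e1 e2 in hY hYc; rewrite e2 in hG.
apply: (@fin_arith n.+1 X QX Y GY).
all: try done.
all: try (by rewrite -hGl hG hQ).
all: try exact: hYc.
Qed.

End M.

Unset Implicit Arguments.

Theorem corollary4p1 (k : finFieldType) (c : 'I_8 -> 'I_8 -> 'I_8 -> k) :
  same_zeta
    (fun L f => #|Xpts (fun i j l => f (c i j l))|)
    (fun L f => #|Ypts (fun i j l => f (c i j l))|).
Proof.
move=> L f /=.
exact: main_count.
Qed.
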